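(* Let $q>0$. The set $L(q)$ contains a loop of length $1$ if and only if $q=1/b$ for some positive integer $b$. In that case the weight $w_q$ is not unique unless $q=1$.
   Context: For $q>0$, $k\ge0$ and $\mathbf m=(m_0,\dots,m_k)\in\mathbb Z^{k+1}$ put $\mathbf m_j=(m_0,\dots,m_j)$; define $c(q,\mathbf m_0)=m_0$ and $c(q,\mathbf m_j)=m_j+\frac{1}{q\,c(q,\mathbf m_{j-1})}$ for $1\le j\le k$. $\mathbf m$ is a path for $q$ of length $k$ if $c(q,\mathbf m_j)\ne0$ for $0\le j\le k-1$. The weight is $w_q(\mathbf m)=q^{k/2}\prod_{j=0}^{k-1}|c(q,\mathbf m_j)|$ (and $1$ if $k=0$). A loop is a path with $c(q,\mathbf m)=0$; $L(q)$ is the set of loops for $q$. The weight $w_q$ is unique if $w_q(\mathbf m)=w_q(\mathbf n)$ for all paths $\mathbf m,\mathbf n$ for $q$ with $c(q,\mathbf m)=c(q,\mathbf n)$. *)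

(* Defs.v *)
From Stdlib Require Import Reals ZArith List.
Import ListNotations.
Open Scope R_scope.

(* A vector m = (m_0, ..., m_k) in Z^{k+1} is represented as a head m0 : Z
   and a tail ms = [m_1; ...; m_k] : list Z, so k = length ms.
   The prefix m_j = (m_0,...,m_j) is (m0, firstn j ms). *)

Definition cq (q : R) (m0 : Z) (ms : list Z) : R :=
  fold_left (fun acc x => IZR x + / (q * acc)) ms (IZR m0).

Definition is_path (q : R) (m0 : Z) (ms : list Z) : Prop :=
  forall j : nat, (j < length ms)%nat -> cq q m0 (firstn j ms) <> 0.

Definition weight (q : R) (m0 : Z) (ms : list Z) : R :=
  sqrt q ^ length ms *
  fold_right Rmult 1
    (map (fun j => Rabs (cq q m0 (firstn j ms))) (seq 0 (length ms))).

Definition is_loop (q : R) (m0 : Z) (ms : list Z) : Prop :=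
  is_path q m0 ms /\ cq q m0 ms = 0.

Definition weight_unique (q : R) : Prop :=
  forall (m0 : Z) (ms : list Z) (n0 : Z) (ns : list Z),
    is_path q m0 ms -> is_path q n0 ns -> cq q m0 ms = cq q n0 ns ->
    weight q m0 ms = weight q n0 ns.

(* Main.v *)
Require Import Defs.
From Stdlib Require Import Reals ZArith List Lra Lia.
Import ListNotations.
Open Scope R_scope.

Theorem corollary4 (q : R) (hq : 0 < q) :
  ((exists m0 m1 : Z, is_loop q m0 [m1]) <->
     (exists b : Z, (0 < b)%Z /\ q = / IZR b)) /\
  (forall b : Z, (0 < b)%Z -> q = / IZR b -> q <> 1 -> ~ weight_unique q).
Proof.
  split; [split|].
  - intros [m0 [m1 [Hp Hc]]].
    assert (H0 : IZR m0 <> 0) by (apply (Hp 0%nat); simpl; lia).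
    unfold cq in Hc; simpl in Hc.
    assert (Hq0 : q <> 0) by lra.
    assert (E : IZR m1 * (q * IZR m0) = -1).
    { assert (IZR m1 = - / (q * IZR m0)) by lra. rewrite H. field. split; auto. }
    exists (- (m0 * m1))%Z.
    assert (Eb : IZR (- (m0 * m1)) = / q).
    { rewrite opp_IZR, mult_IZR. apply (Rmult_eq_reg_l q); [|lra].
      rewrite Rinv_r by lra. lra. }
    split.
    + apply lt_IZR. rewrite Eb. simpl. apply Rinv_0_lt_compat; lra.
    + rewrite Eb, Rinv_inv. reflexivity.
  - intros [b [Hb Hq]].
    exists b, (-1)%Z. split.
    + intros j Hj. simpl in Hj. destruct j; [|simpl in Hj; lia].
      simpl. apply not_0_IZR. lia.
    + unfold cq; simpl. rewrite Hq.
      assert (IZR b <> 0) by (apply not_0_IZR; lia).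
      field. auto.
  - intros b Hb Hq Hq1 Hu.
    assert (Hbnz : IZR b <> 0) by (apply not_0_IZR; lia).
    specialize (Hu 1%Z [0%Z] b []).
    assert (Hw : weight q 1 [0%Z] = weight q b []).
    { apply Hu.
      - intros j Hj. simpl in Hj. destruct j; [|simpl in Hj; lia].
        simpl. apply not_0_IZR; lia.
      - intros j Hj. simpl in Hj. lia.
      - unfold cq; simpl. rewrite Hq. field. auto. }
    unfold weight in Hw; simpl in Hw.
    unfold cq in Hw; simpl in Hw.
    rewrite Rabs_R1 in Hw.
    assert (sqrt q = 1) by lra.
    apply Hq1. rewrite <- (sqrt_sqrt q) by lra. rewrite H. lra.
Qed.
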